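(* Fast-track actions are optimal: let $s_t$ be a state in which the current color $p_t\neq 0$, the next upstream car has color $e_{t,1}=p_t$, and some lane $i$ is completely empty. Then the store action that places this car into lane $i$ (action $a=L+i$) is optimal in $s_t$.
   Context: Paint shop problem with a multi-lane buffer: an upstream sequence of cars with colors in $\{1,\dots,C\}$ is processed in order; the buffer has $L$ lanes, each a first-in-first-out queue of capacity $W$, with $B_{t,i,j}\in\{0,\dots,C\}$ the color at position $j$ of lane $i$ at time $t$ (0 = empty, position $W$ is the front/exit of the lane, new cars enter at the rightmost empty position). $e_{t,1}$ is the color of the next upstream car (0 if the upstream sequence is empty), and $p_t\in\{0,\dots,C\}$ is the color of the last car appended to the downstream sequence (0 initially). Actions: $a\in\{1,\dots,L\}$ retrieves the front car of lane $a$ and appends it to the downstream sequence (setting $p_{t+1}=B_{t,a,W}$); $a\in\{L+1,\dots,2L\}$ stores the next upstream car in lane $a-L$ (leaving $p$ unchanged). Reward: $r(s_t,a)=1$ for a valid retrieval with $B_{t,a,W}=p_t$; $0$ for a valid retrieval with $B_{t,a,W}\neq p_t$; $0$ for a valid store; $-10$ for an invalid action (retrieving from an empty lane, storing into a full lane, or storing when the upstream sequence is empty). The cumulative reward of actions $a_1,\dots,a_n$ from state $s_0$ is $r(s_0,a_1,\dots,a_n)=\sum_{t=0}^{n-1} r(s_t,a_{t+1})$, where $s_{t+1}$ results from applying $a_{t+1}$ in $s_t$. An action $a^*$ is optimal in $s_t$ if $\max_{a_1,\dots,a_n}r(s_t,a^*,a_1,\dots,a_n)\ge r(s_t,a',a'_1,\dots,a'_n)$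 for all actions $a',a'_1,\dots,a'_n$. *)

(* Defs.v *)
From mathcomp Require Import all_boot.
From Stdlib Require Import ZArith.
Set Implicit Arguments. Unset Strict Implicit. Unset Printing Implicit Defensive.

(* A state of the paint shop with a multi-lane buffer.
   - [buf s] : list of the L lanes; lane number i (1-indexed, as in the paper)
     is [nth [::] (buf s) i.-1]. Each lane is a FIFO queue listed FRONT FIRST:
     its head is the car at the exit position W; the occupied cells are the
     nonzero entries B_{t,i,.} (empty cells are not stored).
   - [ups s] : remaining upstream sequence; e_{t,1} = head 0 (ups s).
   - [cur s] : p_t, colour of the last car appended downstream (0 initially). *)
Record state := mkState { buf : seq (seq nat); ups : seq nat; cur : nat }.

Definition color_ok (C c : nat) : bool := (1 <= c <= C).

Definition wf_state (C L W : nat) (s : state) : Prop :=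
  size (buf s) = L /\
  all (fun lane => size lane <= W) (buf s) /\
  all (fun lane => all (color_ok C) lane) (buf s) /\
  all (color_ok C) (ups s) /\
  cur s <= C.

Definition action_ok (L a : nat) : bool := (1 <= a <= 2 * L).

Definition step (L W : nat) (s : state) (a : nat) : Z * state :=
  if (1 <= a <= L) then
    let i := a.-1 in
    match nth [::] (buf s) i with
    | [::] => ((-10)%Z, s)
    | c :: rest =>
        ((if c == cur s then 1%Z else 0%Z),
         mkState (set_nth [::] (buf s) i rest) (ups s) c)
    end
  else if (L < a <= 2 * L) then
    let i := (a - L).-1 in
    let lane := nth [::] (buf s) i in
    match ups s with
    | [::] => ((-10)%Z, s)
    | e :: ups' =>
        if W <= size lane then ((-10)%Z, s)
        else (0%Z, mkState (set_nth [::] (buf s) i (rcons lane e)) ups' (cur s))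
    end
  else ((-10)%Z, s).

Fixpoint cum_reward (L W : nat) (s : state) (acts : seq nat) : Z :=
  match acts with
  | [::] => 0%Z
  | a :: rest => let (r, s') := step L W s a in (r + cum_reward L W s' rest)%Z
  end.

Definition optimal (L W : nat) (s : state) (astar : nat) : Prop :=
  forall (a' : nat) (rest' : seq nat),
    action_ok L a' -> all (action_ok L) rest' ->
    exists rest : seq nat,
      all (action_ok L) rest /\
      (cum_reward L W s (a' :: rest') <= cum_reward L W s (astar :: rest))%Z.

(* Main.v *)
Require Import Defs.
From mathcomp Require Import all_boot.
From mathcomp Require Import zify.
From Stdlib Require Import ZArith Lia.

Lemma set_nth_id (b : seq (seq nat)) k : k < size b -> set_nth [::] b k (nth [::] b k) = b.
Proof.
move=> hk; apply: (@eq_from_nth _ [::]); first by rewrite size_set_nth; lia.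
by move=> j _; rewrite nth_set_nth /=; case: eqP => // ->.
Qed.

Lemma stepR L W s k : k < L -> step L W s k.+1 =
  match nth [::] (buf s) k with
  | [::] => ((-10)%Z, s)
  | c :: rest => ((if c == cur s then 1%Z else 0%Z), mkState (set_nth [::] (buf s) k rest) (ups s) c)
  end.
Proof. by move=> hk; rewrite /step ifT //; lia. Qed.

Lemma stepS L W s k : k < L -> step L W s (L + k.+1) =
    match ups s with
    | [::] => ((-10)%Z, s)
    | e :: ups' =>
        if W <= size (nth [::] (buf s) k) then ((-10)%Z, s)
        else (0%Z, mkState (set_nth [::] (buf s) k (rcons (nth [::] (buf s) k) e)) ups' (cur s))
    end.
Proof.
move=> hk; rewrite /step ifF; last by lia.
rewrite ifT; last by lia.
by have -> : (L + k.+1 - L).-1 = k by lia.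
Qed.

Lemma action_split L a : action_ok L a ->
  (exists k, k < L /\ a = k.+1) \/ (exists k, k < L /\ a = L + k.+1).
Proof.
rewrite /action_ok => h; case: (leqP a L) => h2.
  by left; exists a.-1; split; lia.
by right; exists (a - L).-1; split; lia.
Qed.

Lemma cum_cons L W s a acts :
  cum_reward L W s (a :: acts) = ((step L W s a).1 + cum_reward L W (step L W s a).2 acts)%Z.
Proof. by rewrite /=; case: (step L W s a). Qed.

Lemma lemB L W acts b u c1 c2 :
  (cum_reward L W (mkState b u c1) acts <= 1 + cum_reward L W (mkState b u c2) acts)%Z.
Proof.
elim: acts b u c1 c2 => [|a acts IH] b u c1 c2; first by simpl; lia.
rewrite !cum_cons /step; cbn [buf ups cur].
case: ifP => _.
  case: (nth [::] b a.-1) => [|c rest]; cbn [fst snd]; first by have := IH b u c1 c2; lia.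
  case: eqP => _; case: eqP => _; lia.
case: ifP => _; last by cbn [fst snd]; have := IH b u c1 c2; lia.
case: u => [|e u']; cbn [fst snd]; first by have := IH b [::] c1 c2; lia.
case: ifP => _; cbn [fst snd]; first by have := IH b (e::u') c1 c2; lia.
move: (IH (set_nth [::] b (a-L).-1 (rcons (nth [::] b (a - L).-1) e)) u' c1 c2); lia.
Qed.
Lemma sizeL (b : seq (seq nat)) L k y : size b = L -> k < L -> size (set_nth [::] b k y) = L.
Proof. by move=> h hk; rewrite size_set_nth h; lia. Qed.

Definition G L x (s t : state) : Prop :=
  cur s = cur t /\ size (buf s) = L /\ size (buf t) = L /\
  ((buf s = buf t /\ ups s = x :: ups t) \/
   (ups s = ups t /\ exists j pre post, j < L /\ nth [::] (buf s) j = pre ++ x :: post /\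
        buf t = set_nth [::] (buf s) j (pre ++ post))).

Lemma ghost L W x acts : forall s t, all (action_ok L) acts -> G L x s t ->
  exists acts', all (action_ok L) acts' /\
     (cum_reward L W s acts <= 1 + cum_reward L W t acts')%Z.
Proof.
elim: acts => [|a acts IH] [bs us cs] [bt ut ct].
  by move=> _ _; exists [::]; split => //=; lia.
move=> hA [hc [hs [ht hrel]]]; case/andP: hA => aok hall.
cbn [cur buf ups] in hc, hs, ht, hrel; subst ct.
have skip : G L x (mkState bs us cs) (mkState bt ut cs) ->
  forall z : Z, (z <= 0)%Z -> exists acts', all (action_ok L) acts' /\
     (z + cum_reward L W (mkState bs us cs) acts <= 1 + cum_reward L W (mkState bt ut cs) acts')%Z.
  move=> hG z hz; have [acts' [h1 h2]] := IH _ _ hall hG.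
  by exists acts'; split => //; lia.
have hG0 : G L x (mkState bs us cs) (mkState bt ut cs) by [].
rewrite cum_cons.
case: (action_split _ _ aok) => [[k [hk ->]]|[k [hk ->]]].
- rewrite stepR //; cbn [buf ups cur].
  case: hrel => [[hb hu]|[hu [j [pre [post [hj [hnj hbt]]]]]]]; cbn [buf ups cur] in *.
  + subst bt. case E: (nth [::] bs k) => [|c rest]; cbn [fst snd].
      by apply: skip.
    case: (IH (mkState (set_nth [::] bs k rest) us c)
                               (mkState (set_nth [::] bs k rest) ut c) hall) => [|acts' [h1 h2]].
      by split=> //; split; [cbn [buf]; exact: sizeL | split; [cbn [buf]; exact: sizeL | left]].
    exists (k.+1 :: acts'); split; first by rewrite /= h1 andbT /action_ok; lia.
    rewrite cum_cons stepR //; cbn [buf ups cur]; rewrite E; cbn [fst snd]; lia.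
  + subst ut. case: (eqVneq k j) => [ekj|hkj].
    * subst j bt. rewrite hnj. clear hG0 skip; case: pre hnj ht => [|c pre] hnj ht; cbn [fst snd cat].
        exists acts; split => //.
        case: eqP => [<-|_].
          lia.
        by have := lemB L W acts (set_nth [::] bs k post) us x cs; lia.
      case: (IH (mkState (set_nth [::] bs k (pre ++ x :: post)) us c)
            (mkState (set_nth [::] (set_nth [::] bs k (c :: pre ++ post)) k (pre ++ post)) us c) hall) => [|acts' [h1 h2]].
        split=> //; split; first by cbn [buf]; apply: sizeL.
        split; first by cbn [buf]; apply: sizeL => //; apply: sizeL.
        right; split => //; exists k, pre, post; split => //; cbn [buf].
        split; first by rewrite nth_set_nth /= eqxx.
        by rewrite set_set_nth eqxx [in RHS]set_set_nth eqxx.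
      exists (k.+1 :: acts'); split; first by rewrite /= h1 andbT /action_ok; lia.
      rewrite cum_cons stepR //; cbn [buf ups cur]; have -> : nth [::] (set_nth [::] bs k (c :: pre ++ post)) k = c :: pre ++ post by rewrite nth_set_nth /= eqxx.
      cbn [fst snd]; lia.
    * case E: (nth [::] bs k) => [|c rest]; cbn [fst snd].
        by apply: skip.
      case: (IH (mkState (set_nth [::] bs k rest) us c)
            (mkState (set_nth [::] bt k rest) us c) hall) => [|acts' [h1 h2]].
        split=> //; split; first by cbn [buf]; apply: sizeL.
        split; first by cbn [buf]; apply: sizeL.
        right; split => //; exists j, pre, post; split => //; cbn [buf].
        rewrite nth_set_nth /= eq_sym (negbTE hkj); split => //.
        by rewrite hbt set_set_nth eq_sym (negbTE hkj).
      exists (k.+1 :: acts'); split; first by rewrite /= h1 andbT /action_ok; lia.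
      rewrite cum_cons stepR //; cbn [buf ups cur].
      have -> : nth [::] bt k = c :: rest by rewrite hbt nth_set_nth /= (negbTE hkj) E.
      cbn [fst snd]; lia.
- rewrite stepS //; cbn [buf ups cur].
  case: hrel => [[hb hu]|[hu [j [pre [post [hj [hnj hbt]]]]]]]; cbn [buf ups cur] in *.
  + subst bt us. case: ifP => hW; cbn [fst snd].
      by apply: skip.
    case: (IH (mkState (set_nth [::] bs k (rcons (nth [::] bs k) x)) ut cs)
              (mkState bs ut cs) hall) => [|acts' [h1 h2]].
      split=> //; split; first by cbn [buf]; apply: sizeL.
      split=> //; right; split => //; exists k, (nth [::] bs k), [::]; split => //; cbn [buf].
      split; first by rewrite nth_set_nth /= eqxx cats1.
      by rewrite set_set_nth eqxx cats0 set_nth_id // hs.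
    by exists acts'; split => //; lia.
  + subst ut. case: us hG0 skip => [|e u'] hG0 skip; cbn [fst snd].
      by apply: skip.
    case: ifP => hW; cbn [fst snd].
      by apply: skip.
    have hsz : size (nth [::] bt k) <= size (nth [::] bs k).
      rewrite hbt nth_set_nth /=; case: eqP => [->|_] //.
      by rewrite hnj !size_cat /=; lia.
    case: (IH (mkState (set_nth [::] bs k (rcons (nth [::] bs k) e)) u' cs)
              (mkState (set_nth [::] bt k (rcons (nth [::] bt k) e)) u' cs) hall) => [|acts' [h1 h2]].
      split=> //; split; first by cbn [buf]; apply: sizeL.
      split; first by cbn [buf]; apply: sizeL.
      right; split => //; cbn [buf].
      case: (eqVneq k j) => [ekj|hkj].
        subst j; exists k, pre, (rcons post e); split => //.
        split; first by rewrite nth_set_nth /= eqxx hnj rcons_cat.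
        rewrite hbt set_set_nth eqxx [in RHS]set_set_nth eqxx nth_set_nth /= eqxx.
        by rewrite rcons_cat.
      exists j, pre, post; split => //.
      split; first by rewrite nth_set_nth /= eq_sym (negbTE hkj).
      rewrite hbt set_set_nth eq_sym (negbTE hkj).
      by rewrite nth_set_nth /= (negbTE hkj).
    exists ((L + k.+1) :: acts'); split; first by rewrite /= h1 andbT /action_ok; lia.
    rewrite cum_cons stepS //; cbn [buf ups cur].
    have -> : (W <= size (nth [::] bt k)) = false by apply/negbTE; move/negbT: hW; lia.
    cbn [fst snd]; lia.
Qed.

Theorem corollary1 (C L W : nat) (s : state) (i : nat) :
  0 < W ->
  wf_state C L W s ->
  cur s != 0 ->
  head 0 (ups s) = cur s ->
  1 <= i <= L ->
  nth [::] (buf s) i.-1 = [::] ->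
  optimal L W s (L + i).
Proof.
case: s => b u c hW [hs _] hc hh hi hn a' rest' ha hr; cbn [buf ups cur] in hs, hc, hh, hn.
case: u hh => [|e u'] hh; cbn [head] in hh; first by move: hc; rewrite -hh.
subst e.
have hk : i.-1 < L by lia.
have [acts' [h1 h2]] := ghost L W c (a' :: rest') (mkState b (c :: u') c) (mkState b u' c)
   (introT andP (conj ha hr)) (conj erefl (conj hs (conj hs (or_introl (conj erefl erefl))))).
exists (i :: acts'); split; first by rewrite /= h1 andbT /action_ok; lia.
have ei : i = (i.-1).+1 by lia.
move: hk hn; set k := i.-1 => hk hn.
rewrite ei !cum_cons stepS //; cbn [buf ups cur]; rewrite hn.
have -> : (W <= size (@nil nat)) = false by rewrite /=; lia.
cbn [fst snd].
rewrite stepR //; cbn [buf ups cur].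
have -> : nth [::] (set_nth [::] b k (rcons [::] c)) k = [:: c] by rewrite nth_set_nth /= eqxx.
have hb : set_nth [::] b k [::] = b by move: (set_nth_id b k); rewrite hn hs; apply.
cbn [fst snd]. rewrite eqxx set_set_nth eqxx hb.
rewrite cum_cons in h2; lia.
Qed.
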